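(* For every environment $\omega$, $n=l+m$, $x=-l+m$ with $l,m\ge 0$, $$P^{\omega}_n(X_n=x)=P^{\mathbf 0}_n(X_n=x)+\tfrac12\{p^{(H)}_n(l,m)^2-q^{(H)}_n(l,m)^2\}\sin(\omega_0)$$ $$\quad-\frac{r^{(H)}_n(l,m)}{2}\Big[p^{(H)}_n(l,m)\,\Im\big((1+e^{2i\omega_0})\Theta^{(p)}_n(l,m)\overline{\Theta^{(r)}_n(l,m)}\big)+q^{(H)}_n(l,m)\,\Im\big((1+e^{2i\omega_0})\Theta^{(s)}_n(l,m)\overline{\Theta^{(q)}_n(l,m)}\big)\Big],$$ where $P^{\mathbf 0}_n$ is the quenched law for the environment $\omega\equiv 0$ and $\Im$ denotes imaginary part.
   Context: $U_x=\frac{1}{\sqrt2}\begin{pmatrix} e^{i\omega_x} & 1\\ 1 & -e^{-i\omega_x}\end{pmatrix}=\begin{pmatrix} a_x & b_x\\ c_x & d_x\end{pmatrix}$, $P_x=\begin{pmatrix} a_x & b_x\\ 0&0\end{pmatrix}$, $Q_x=\begin{pmatrix} 0&0\\ c_x & d_x\end{pmatrix}$, $R_0=\begin{pmatrix} c_0 & d_0\\ 0&0\end{pmatrix}$, $S_0=\begin{pmatrix} 0&0\\ a_0 & b_0\end{pmatrix}$. $\Xi_0(0,0)=I$, $\Xi_n(l,m)=0$ if $l<0$ or $m<0$, and $\Xi_{n+1}(l,m)=P_{x+1}\Xi_n(l-1,m)+Q_{x-1}\Xi_n(l,m-1)$ for $l,m\ge0$, $l+m=n+1$, $x=-l+m$.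 With $\varphi_*={}^T[1/\sqrt2,i/\sqrt2]$, $P^{\omega}_n(X_n=x)=\|\Xi_n(l,m)\varphi_*\|^2$. The quantities $\Theta^{(a)}_n(l,m)$ and $a^{(H)}_n(l,m)$ ($a\in\{p,q,r,s\}$) are defined by: for $\min\{l,m\}\ge1$, $\Theta^{(p)}_n=e^{i(\omega_{-1}+\cdots+\omega_{-(l-m-1)})}$ if $l-1>m$, $1$ if $l-1=m$, $e^{-i(\omega_0+\cdots+\omega_{m-l})}$ if $l-1<m$; $\Theta^{(q)}_n=e^{i(\omega_0+\cdots+\omega_{-(l-m)})}$ if $l>m-1$, $1$ if $l=m-1$, $e^{-i(\omega_1+\cdots+\omega_{m-l-1})}$ if $l<m-1$; $\Theta^{(r)}_n=e^{i(\omega_0+\cdots+\omega_{-(l-m-1)})}$ if $l>m$, $1$ if $l=m$, $e^{-i(\omega_1+\cdots+\omega_{m-l})}$ if $l<m$; $\Theta^{(s)}_n=e^{i(\omega_{-1}+\cdots+\omega_{-(l-m)})}$ if $l>m$, $1$ if $l=m$, $e^{-i(\omega_0+\cdots+\omega_{m-l-1})}$ if $l<m$; $p^{(H)}_n(l,m)=(1/\sqrt2)^{n-1}\sum_{\gamma=1}^{(l-1)\wedge m}(-1)^{m-\gamma}\binom{l-1}{\gamma}\binom{m-1}{\gamma-1}$, $q^{(H)}_n(l,m)=(1/\sqrt2)^{n-1}\sum_{\gamma=1}^{l\wedge(m-1)}(-1)^{m-\gamma-1}\binom{l-1}{\gamma-1}\binom{m-1}{\gamma}$, $r^{(H)}_n=s^{(H)}_n=(1/\sqrt2)^{n-1}\sum_{\gamma=1}^{l\wedge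 m}(-1)^{m-\gamma}\binom{l-1}{\gamma-1}\binom{m-1}{\gamma-1}$. For $\min\{l,m\}=0$: $q^{(H)}_n(0,n)=(-1/\sqrt2)^{n-1}$, $\Theta^{(q)}_n(0,n)=e^{-i(\omega_1+\cdots+\omega_{n-1})}$, $p^{(H)}_n(n,0)=(1/\sqrt2)^{n-1}$, $\Theta^{(p)}_n(n,0)=e^{i(\omega_{-1}+\cdots+\omega_{-(n-1)})}$, all other $a^{(H)}$ equal $0$ and all other $\Theta$ equal $1$. These satisfy $\Xi_n(l,m)=\sum_{a}\Theta^{(a)}_n a^{(H)}_n A_0$ with $A_0\in\{P_0,Q_0,R_0,S_0\}$ respectively. *)

(* Defs.v *)
From Stdlib Require Import Reals ZArith Arith Bool.
Open Scope R_scope.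

Definition Cx : Type := (R * R)%type.
Definition Cre (z : Cx) : R := fst z.
Definition Cim (z : Cx) : R := snd z.
Definition CR (a : R) : Cx := (a, 0).
Definition Czero : Cx := (0, 0).
Definition Cone : Cx := (1, 0).
Definition Ci : Cx := (0, 1).
Definition Cadd (z w : Cx) : Cx := (fst z + fst w, snd z + snd w).
Definition Copp (z : Cx) : Cx := (- fst z, - snd z).
Definition Cmul (z w : Cx) : Cx :=
  (fst z * fst w - snd z * snd w, fst z * snd w + snd z * fst w).
Definition Cconj (z : Cx) : Cx := (fst z, - snd z).
Definition Cnorm2 (z : Cx) : R := fst z * fst z + snd z * snd z.
Definition Cexpi (t : R) : Cx := (cos t, sin t).

Record M2 := mkM2 { m11 : Cx; m12 : Cx; m21 : Cx; m22 : Cx }.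
Definition Mzero : M2 := mkM2 Czero Czero Czero Czero.
Definition Mid : M2 := mkM2 Cone Czero Czero Cone.
Definition Madd (A B : M2) : M2 :=
  mkM2 (Cadd (m11 A) (m11 B)) (Cadd (m12 A) (m12 B))
       (Cadd (m21 A) (m21 B)) (Cadd (m22 A) (m22 B)).
Definition Mmul (A B : M2) : M2 :=
  mkM2 (Cadd (Cmul (m11 A) (m11 B)) (Cmul (m12 A) (m21 B)))
       (Cadd (Cmul (m11 A) (m12 B)) (Cmul (m12 A) (m22 B)))
       (Cadd (Cmul (m21 A) (m11 B)) (Cmul (m22 A) (m21 B)))
       (Cadd (Cmul (m21 A) (m12 B)) (Cmul (m22 A) (m22 B))).
Definition Mapply (A : M2) (v : Cx * Cx) : Cx * Cx :=
  (Cadd (Cmul (m11 A) (fst v)) (Cmul (m12 A) (snd v)),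
   Cadd (Cmul (m21 A) (fst v)) (Cmul (m22 A) (snd v))).
Definition Vnorm2 (v : Cx * Cx) : R := Cnorm2 (fst v) + Cnorm2 (snd v).

Definition env := Z -> R.

(* U_x = 1/sqrt2 [[e^{i w_x}, 1], [1, - e^{- i w_x}]] = [[a_x, b_x], [c_x, d_x]] *)
Definition a_ (om : env) (x : Z) : Cx := Cmul (CR (/ sqrt 2)) (Cexpi (om x)).
Definition b_ (om : env) (x : Z) : Cx := CR (/ sqrt 2).
Definition c_ (om : env) (x : Z) : Cx := CR (/ sqrt 2).
Definition d_ (om : env) (x : Z) : Cx :=
  Copp (Cmul (CR (/ sqrt 2)) (Cexpi (- om x))).

Definition Pm (om : env) (x : Z) : M2 := mkM2 (a_ om x) (b_ om x) Czero Czero.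
Definition Qm (om : env) (x : Z) : M2 := mkM2 Czero Czero (c_ om x) (d_ om x).

Definition pos (l m : nat) : Z := (- Z.of_nat l + Z.of_nat m)%Z.

(* Xi_n(l,m); it is zero unless l + m = n (in particular Xi_n(l,m) = 0 for
   the "negative" indices, which cannot occur for nat l m). *)
Fixpoint Xi (om : env) (n : nat) (l m : nat) : M2 :=
  match n with
  | O => match l, m with O, O => Mid | _, _ => Mzero end
  | S n' =>
      Madd
        (match l with
         | O => Mzero
         | S l' => Mmul (Pm om (pos l m + 1)%Z) (Xi om n' l' m)
         end)
        (match m with
         | O => Mzero
         | S m' => Mmul (Qm om (pos l m - 1)%Z) (Xi om n' l m')
         end)
  end.

Definition phi_star : Cx * Cx := (CR (/ sqrt 2), (0, / sqrt 2)).

(* quenched probability P^omega_n(X_n = -l+m), for l + m = n *)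
Definition prob (om : env) (n l m : nat) : R :=
  Vnorm2 (Mapply (Xi om n l m) phi_star).

Definition env0 : env := fun _ => 0.

Fixpoint binom (n k : nat) : nat :=
  match n, k with
  | _, O => 1
  | O, S _ => 0
  | S n', S k' => (binom n' k' + binom n' k)%nat
  end.

Fixpoint sum1 (N : nat) (f : nat -> R) : R :=
  match N with
  | O => 0
  | S N' => sum1 N' f + f N
  end.

Definition sgn (k : nat) : R := (-1) ^ k.

Definition pH (n l m : nat) : R :=
  if andb (1 <=? l)%nat (1 <=? m)%nat then
    (/ sqrt 2) ^ (n - 1) *
    sum1 (Nat.min (l - 1) m)
      (fun g => sgn (m - g) * INR (binom (l - 1) g) * INR (binom (m - 1) (g - 1)))
  else if (m =? 0)%nat then (/ sqrt 2) ^ (n - 1)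
  else 0.

Definition qH (n l m : nat) : R :=
  if andb (1 <=? l)%nat (1 <=? m)%nat then
    (/ sqrt 2) ^ (n - 1) *
    sum1 (Nat.min l (m - 1))
      (fun g => sgn (m - g - 1) * INR (binom (l - 1) (g - 1)) * INR (binom (m - 1) g))
  else if (l =? 0)%nat then (- / sqrt 2) ^ (n - 1)
  else 0.

Definition rH (n l m : nat) : R :=
  if andb (1 <=? l)%nat (1 <=? m)%nat then
    (/ sqrt 2) ^ (n - 1) *
    sum1 (Nat.min l m)
      (fun g => sgn (m - g) * INR (binom (l - 1) (g - 1)) * INR (binom (m - 1) (g - 1)))
  else 0.

Definition sH (n l m : nat) : R := rH n l m.

(* wsum om a b = omega_a + omega_{a+1} + ... + omega_b  (0 if b < a) *)
Definition wsum (om : env) (a b : Z) : R :=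
  let fix go (k : nat) : R :=
    match k with
    | O => 0
    | S k' => go k' + om (a + Z.of_nat k')%Z
    end in
  go (Z.to_nat (b - a + 1)).

Definition dd (l m : nat) : Z := (Z.of_nat m - Z.of_nat l)%Z.

Definition ThetaP (om : env) (n l m : nat) : Cx :=
  if andb (1 <=? l)%nat (1 <=? m)%nat then
    let d := dd l m in
    if (d + 1 <? 0)%Z then Cexpi (wsum om (d + 1) (-1))
    else if (d + 1 =? 0)%Z then Cone
    else Cexpi (- wsum om 0 d)
  else if (m =? 0)%nat then Cexpi (wsum om (- (Z.of_nat n - 1)) (-1))
  else Cone.

Definition ThetaQ (om : env) (n l m : nat) : Cx :=
  if andb (1 <=? l)%nat (1 <=? m)%nat then
    let d := dd l m in
    if (d <=? 0)%Z then Cexpi (wsum om d 0)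
    else if (d =? 1)%Z then Cone
    else Cexpi (- wsum om 1 (d - 1))
  else if (l =? 0)%nat then Cexpi (- wsum om 1 (Z.of_nat n - 1))
  else Cone.

Definition ThetaR (om : env) (n l m : nat) : Cx :=
  if andb (1 <=? l)%nat (1 <=? m)%nat then
    let d := dd l m in
    if (d <? 0)%Z then Cexpi (wsum om (d + 1) 0)
    else if (d =? 0)%Z then Cone
    else Cexpi (- wsum om 1 d)
  else Cone.

Definition ThetaS (om : env) (n l m : nat) : Cx :=
  if andb (1 <=? l)%nat (1 <=? m)%nat then
    let d := dd l m in
    if (d <? 0)%Z then Cexpi (wsum om d (-1))
    else if (d =? 0)%Z then Cone
    else Cexpi (- wsum om 0 (d - 1))
  else Cone.

(* Main.v *)
Require Import Defs.
From Stdlib Require Import Reals ZArith Arith Lia Lra Ring Psatz.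
Notation pos := Defs.pos.
Open Scope R_scope.

Lemma sum1_ext K f h : (forall g, (1 <= g <= K)%nat -> f g = h g) -> sum1 K f = sum1 K h.
Proof. induction K; intros H; simpl; [reflexivity|]. rewrite IHK by (intros; apply H; lia). rewrite H by lia. reflexivity. Qed.

Lemma sum1_plus K f h : sum1 K (fun g => f g + h g) = sum1 K f + sum1 K h.
Proof. induction K; simpl; [ring|]. rewrite IHK; ring. Qed.
Lemma sum1_minus K f h : sum1 K (fun g => f g - h g) = sum1 K f - sum1 K h.
Proof. induction K; simpl; [ring|]. rewrite IHK; ring. Qed.
Lemma sum1_scal K c f : sum1 K (fun g => c * f g) = c * sum1 K f.
Proof. induction K; simpl; [ring|]. rewrite IHK; ring. Qed.
Lemma sum1_zero K f : (forall g, (1 <= g <= K)%nat -> f g = 0) -> sum1 K f = 0.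
Proof. induction K; intros H; simpl; [reflexivity|]. rewrite IHK by (intros; apply H; lia). rewrite H by lia. ring. Qed.
Lemma sum1_extend K K' f : (K <= K')%nat -> (forall g, (K < g)%nat -> f g = 0) -> sum1 K' f = sum1 K f.
Proof. intros HK H. induction K'.
 - replace K with 0%nat by lia. reflexivity.
 - destruct (Nat.eq_dec K (S K')). subst; reflexivity.
   simpl. rewrite IHK' by lia. rewrite H by lia. ring. Qed.
Lemma sum1_shift B f : sum1 (S B) f = f 1%nat + sum1 B (fun g => f (S g)).
Proof. induction B; simpl; [ring|]. simpl in IHB. rewrite IHB. ring. Qed.

Lemma binom_gt n k : (n < k)%nat -> binom n k = 0%nat.
Proof. revert k; induction n; intros k H; destruct k; try lia; simpl; auto.
 rewrite !IHn by lia. reflexivity. Qed.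
Lemma binom_0r n : binom n 0 = 1%nat.
Proof. destruct n; reflexivity. Qed.
Lemma pascal n g : (1 <= g)%nat -> binom (S n) g = (binom n (g-1) + binom n g)%nat.
Proof. intros H. destruct g; [lia|]. replace (S g - 1)%nat with g by lia. reflexivity. Qed.

Lemma sgn_sub m g : (g <= m)%nat -> sgn (m - g) = (-1)^m * (-1)^g.
Proof. intros H. unfold sgn.
 replace ((-1)^m) with ((-1)^(m-g) * (-1)^g) by (rewrite <- pow_add; f_equal; lia).
 rewrite Rmult_assoc, <- Rpow_mult_distr.
 replace (-1 * -1) with 1 by ring. rewrite pow1. ring. Qed.

Definition Pp L M B := sum1 B (fun g => (-1)^g * INR (binom L g) * INR (binom M (g-1))).
Definition Qq L M B := sum1 B (fun g => (-1)^g * INR (binom L (g-1)) * INR (binom M g)).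
Definition Rr L M B := sum1 B (fun g => (-1)^g * INR (binom L (g-1)) * INR (binom M (g-1))).

Lemma lemP1 L M B : Pp (S L) M B = Pp L M B + Rr L M B.
Proof. unfold Pp, Rr. rewrite <- sum1_plus. apply sum1_ext; intros g Hg.
 rewrite pascal by lia. rewrite plus_INR. ring. Qed.
Lemma lemQ1 L M B : Qq L (S M) B = Rr L M B + Qq L M B.
Proof. unfold Qq, Rr. rewrite <- sum1_plus. apply sum1_ext; intros g Hg.
 rewrite (pascal M) by lia. rewrite plus_INR. ring. Qed.
Lemma lemR1 L M B : Rr (S L) M (S B) = Rr L M (S B) - Qq L M B.
Proof. unfold Rr, Qq. rewrite !sum1_shift. replace (1-1)%nat with 0%nat by reflexivity.
 rewrite !binom_0r.
 match goal with |- _ + ?X = _ + ?Y - ?Z => replace X with (Y - Z); [ring|] end.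
 rewrite <- sum1_minus. apply sum1_ext; intros g Hg.
 replace (S g - 1)%nat with g by lia. rewrite pascal by lia. rewrite plus_INR. simpl pow. ring. Qed.
Lemma lemR2 L M B : Rr L (S M) (S B) = Rr L M (S B) - Pp L M B.
Proof. unfold Rr, Pp. rewrite !sum1_shift. replace (1-1)%nat with 0%nat by reflexivity.
 rewrite !binom_0r.
 match goal with |- _ + ?X = _ + ?Y - ?Z => replace X with (Y - Z); [ring|] end.
 rewrite <- sum1_minus. apply sum1_ext; intros g Hg.
 replace (S g - 1)%nat with g by lia. rewrite (pascal M) by lia. rewrite plus_INR. simpl pow. ring. Qed.
Lemma Rr_0M M B : Rr 0 M (S B) = -1.
Proof. unfold Rr. rewrite sum1_shift. rewrite sum1_zero.
 - replace (1-1)%nat with 0%nat by reflexivity. rewrite !binom_0r. simpl. ring.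
 - intros g Hg. replace (S g - 1)%nat with g by lia. rewrite (binom_gt 0 g) by lia. simpl. ring. Qed.
Lemma Rr_L0 L B : Rr L 0 (S B) = -1.
Proof. unfold Rr. rewrite sum1_shift. rewrite sum1_zero.
 - replace (1-1)%nat with 0%nat by reflexivity. rewrite !binom_0r. simpl. ring.
 - intros g Hg. replace (S g - 1)%nat with g by lia. rewrite (binom_gt 0 g) by lia. simpl. ring. Qed.
Lemma Pp_0M M B : Pp 0 M B = 0.
Proof. unfold Pp. apply sum1_zero. intros g Hg. rewrite (binom_gt 0 g) by lia. simpl. ring. Qed.
Lemma Qq_L0 L B : Qq L 0 B = 0.
Proof. unfold Qq. apply sum1_zero. intros g Hg. rewrite (binom_gt 0 g) by lia. simpl. ring. Qed.

Notation s2 := (/ sqrt 2).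

Lemma pH_int n L M B : (L + M + 1 <= B)%nat ->
  pH n (S L) (S M) = s2 ^ (n-1) * ((-1)^(S M) * Pp L M B).
Proof. intros HB. unfold pH. cbn [andb Nat.leb].
 replace (S L - 1)%nat with L by lia. replace (S M - 1)%nat with M by lia. f_equal.
 transitivity (sum1 (Nat.min L (S M)) (fun g => (-1)^(S M) * ((-1)^g * INR (binom L g) * INR (binom M (g-1))))).
 - apply sum1_ext; intros g Hg. rewrite sgn_sub by lia. ring.
 - rewrite sum1_scal. f_equal. unfold Pp. symmetry. apply sum1_extend; [lia|].
   intros g Hg. destruct (Nat.lt_ge_cases L g).
   + rewrite binom_gt by lia. simpl; ring.
   + rewrite (binom_gt M) by lia. simpl; ring. Qed.

Lemma qH_int n L M B : (L + M + 1 <= B)%nat ->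
  qH n (S L) (S M) = s2 ^ (n-1) * ((-1)^M * Qq L M B).
Proof. intros HB. unfold qH. cbn [andb Nat.leb].
 replace (S L - 1)%nat with L by lia. replace (S M - 1)%nat with M by lia. f_equal.
 transitivity (sum1 (Nat.min (S L) M) (fun g => (-1)^M * ((-1)^g * INR (binom L (g-1)) * INR (binom M g)))).
 - apply sum1_ext; intros g Hg. replace (S M - g - 1)%nat with (M - g)%nat by lia.
   rewrite sgn_sub by lia. ring.
 - rewrite sum1_scal. f_equal. unfold Qq. symmetry. apply sum1_extend; [lia|].
   intros g Hg. destruct (Nat.lt_ge_cases (S L) g).
   + rewrite (binom_gt L) by lia. simpl; ring.
   + rewrite (binom_gt M) by lia. simpl; ring. Qed.

Lemma rH_int n L M B : (L + M + 1 <= B)%nat ->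
  rH n (S L) (S M) = s2 ^ (n-1) * ((-1)^(S M) * Rr L M B).
Proof. intros HB. unfold rH. cbn [andb Nat.leb].
 replace (S L - 1)%nat with L by lia. replace (S M - 1)%nat with M by lia. f_equal.
 transitivity (sum1 (Nat.min (S L) (S M)) (fun g => (-1)^(S M) * ((-1)^g * INR (binom L (g-1)) * INR (binom M (g-1))))).
 - apply sum1_ext; intros g Hg. rewrite sgn_sub by lia. ring.
 - rewrite sum1_scal. f_equal. unfold Rr. symmetry. apply sum1_extend; [lia|].
   intros g Hg. destruct (Nat.lt_ge_cases (S L) g).
   + rewrite (binom_gt L) by lia. simpl; ring.
   + rewrite (binom_gt M) by lia. simpl; ring. Qed.

Lemma pH_l0 n L : pH n (S L) 0 = s2 ^ (n-1). Proof. reflexivity. Qed.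
Lemma pH_0m n M : pH n 0 (S M) = 0. Proof. reflexivity. Qed.
Lemma qH_0m n M : qH n 0 (S M) = (- s2) ^ (n-1). Proof. reflexivity. Qed.
Lemma qH_l0 n L : qH n (S L) 0 = 0. Proof. reflexivity. Qed.
Lemma rH_0m n m : rH n 0 m = 0. Proof. reflexivity. Qed.
Lemma rH_l0 n l : rH n l 0 = 0. Proof. unfold rH. destruct l; reflexivity. Qed.

Lemma pow_pred x n : (1 <= n)%nat -> x ^ n = x * x ^ (n-1).
Proof. intros H. destruct n; [lia|]. simpl. replace (n-0)%nat with n by lia. reflexivity. Qed.
Lemma Sm1 n : (S n - 1)%nat = n. Proof. lia. Qed.

Lemma recA n l m : (1 <= n)%nat -> (l + m = n)%nat ->
  pH (S n) (S l) m = s2 * (pH n l m + rH n l m).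
Proof. intros Hn Hlm. destruct m as [|M].
 - destruct l as [|L]; [lia|]. rewrite !pH_l0, rH_l0, Sm1, (pow_pred _ n) by lia. ring.
 - destruct l as [|L].
   + rewrite (pH_int _ 0 M (S n)) by lia. rewrite Pp_0M, pH_0m, rH_0m. ring.
   + rewrite (pH_int _ (S L) M n), (pH_int _ L M n), (rH_int _ L M n), lemP1 by lia.
     rewrite Sm1, (pow_pred _ n) by lia. ring. Qed.

Lemma recB n l m : (1 <= n)%nat -> (l + m = n)%nat ->
  rH (S n) (S l) m = s2 * (qH n l m + rH n l m).
Proof. intros Hn Hlm. destruct m as [|M].
 - destruct l as [|L]; [lia|]. rewrite !rH_l0, qH_l0. ring.
 - destruct l as [|L].
   + rewrite (rH_int _ 0 M (S n)) by lia. rewrite Rr_0M, qH_0m, rH_0m, Sm1.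
     replace n with (S M) by lia. rewrite Sm1. replace (- s2) with (-1 * s2) by ring. rewrite Rpow_mult_distr.
     simpl pow. ring.
   + rewrite (rH_int (S n) (S L) M (S n)) by lia. rewrite (qH_int n L M n) by lia.
     rewrite (rH_int n L M (S n)) by lia. rewrite lemR1.
     rewrite Sm1, (pow_pred _ n) by lia. simpl pow. ring. Qed.

Lemma recC n l m : (1 <= n)%nat -> (l + m = n)%nat ->
  qH (S n) l (S m) = s2 * (rH n l m - qH n l m).
Proof. intros Hn Hlm. destruct l as [|L].
 - destruct m as [|M]; [lia|]. rewrite !qH_0m, rH_0m, Sm1, (pow_pred _ n) by lia. ring.
 - destruct m as [|M].
   + rewrite (qH_int _ L 0 (S n)) by lia. rewrite Qq_L0, qH_l0, rH_l0. ring.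
   + rewrite (qH_int _ L (S M) n), (qH_int _ L M n), (rH_int _ L M n), lemQ1 by lia.
     rewrite Sm1, (pow_pred _ n) by lia. simpl pow. ring. Qed.

Lemma recD n l m : (1 <= n)%nat -> (l + m = n)%nat ->
  rH (S n) l (S m) = s2 * (pH n l m - rH n l m).
Proof. intros Hn Hlm. destruct l as [|L].
 - destruct m as [|M]; [lia|]. rewrite !rH_0m, pH_0m. ring.
 - destruct m as [|M].
   + rewrite (rH_int _ L 0 (S n)) by lia. rewrite Rr_L0, pH_l0, rH_l0, Sm1, (pow_pred _ n) by lia.
     simpl pow. ring.
   + rewrite (rH_int _ L (S M) (S n)), (pH_int _ L M n), (rH_int _ L M (S n)), lemR2 by lia.
     rewrite Sm1, (pow_pred _ n) by lia. simpl pow. ring. Qed.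

Fixpoint gosum (om : env) (a : Z) (k : nat) : R :=
  match k with O => 0 | S k' => gosum om a k' + om (a + Z.of_nat k')%Z end.

Lemma wsum_go om a b : wsum om a b = gosum om a (Z.to_nat (b - a + 1)).
Proof. unfold wsum. generalize (Z.to_nat (b - a + 1)). induction n; simpl; [reflexivity|].
 rewrite IHn. reflexivity. Qed.

Lemma gosum_split om a k1 k2 : gosum om a (k1 + k2) = gosum om a k1 + gosum om (a + Z.of_nat k1) k2.
Proof. induction k2; simpl. rewrite Nat.add_0_r; ring.
 rewrite Nat.add_succ_r. simpl. rewrite IHk2. rewrite Nat2Z.inj_add. rewrite Z.add_assoc. ring. Qed.

Definition Fp (om : env) (k : Z) : R :=
  if (0 <=? k)%Z then gosum om 0 (Z.to_nat k) else - gosum om k (Z.to_nat (- k)).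

Lemma Fstep om j : Fp om (j + 1) = Fp om j + om j.
Proof. unfold Fp. destruct (Z.leb_spec 0 j).
 - destruct (Z.leb_spec 0 (j+1)); [|lia].
   replace (Z.to_nat (j+1)) with (S (Z.to_nat j)) by lia. simpl. rewrite Z2Nat.id by lia. reflexivity.
 - destruct (Z.leb_spec 0 (j+1)).
   + assert (j = -1)%Z by lia. subst. simpl. ring.
   + replace (Z.to_nat (-j)) with (1 + Z.to_nat (- (j+1)))%nat by lia.
     rewrite gosum_split. simpl. replace (j + 1)%Z with (j + Z.of_nat 1)%Z by reflexivity.
     replace (j+0)%Z with j by ring. ring. Qed.

Lemma F_go om a k : Fp om (a + Z.of_nat k) = Fp om a + gosum om a k.
Proof. induction k; simpl gosum. rewrite Z.add_0_r; ring.
 rewrite Nat2Z.inj_succ. replace (a + Z.succ (Z.of_nat k))%Z with ((a + Z.of_nat k) + 1)%Z by lia.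
 rewrite Fstep, IHk. ring. Qed.

Lemma wsum_F om a b : (a <= b + 1)%Z -> wsum om a b = Fp om (b + 1) - Fp om a.
Proof. intros H. rewrite wsum_go. replace (b+1)%Z with (a + Z.of_nat (Z.to_nat (b - a + 1)))%Z at 1 by lia.
 rewrite F_go. ring. Qed.

Lemma F0 om : Fp om 0 = 0. Proof. reflexivity. Qed.
Lemma F_env0 k : Fp env0 k = 0.
Proof. assert (G: forall a n, gosum env0 a n = 0). { induction n; simpl; [reflexivity|]. rewrite IHn. unfold env0; ring. }
 unfold Fp. destruct (0 <=? k)%Z; rewrite G; ring. Qed.

Definition phP om x := - Fp om (x + 1).
Definition phQ om x := Fp om 1 - Fp om x.
Definition phR om x := Fp om 1 - Fp om (x + 1).
Definition phS om x := - Fp om x.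

Lemma Cexpi0 : Cexpi 0 = Cone.
Proof. unfold Cexpi. rewrite cos_0, sin_0. reflexivity. Qed.

Lemma dd_pos l m : dd l m = pos l m. Proof. unfold dd, pos. lia. Qed.

Lemma ThP om n L M : ThetaP om n (S L) (S M) = Cexpi (phP om (pos (S L) (S M))).
Proof. unfold ThetaP. cbn [andb Nat.leb]. rewrite dd_pos. set (d := pos (S L) (S M)). unfold phP.
 destruct (Z.ltb_spec (d+1) 0).
 - rewrite wsum_F by lia. replace (-1+1)%Z with 0%Z by reflexivity. rewrite F0. f_equal; ring.
 - destruct (Z.eqb_spec (d+1) 0).
   + rewrite e, F0. rewrite Ropp_0, Cexpi0. reflexivity.
   + rewrite wsum_F by lia. rewrite F0. f_equal; ring. Qed.

Lemma ThQ om n L M : ThetaQ om n (S L) (S M) = Cexpi (phQ om (pos (S L) (S M))).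
Proof. unfold ThetaQ. cbn [andb Nat.leb]. rewrite dd_pos. set (d := pos (S L) (S M)). unfold phQ.
 destruct (Z.leb_spec d 0).
 - rewrite wsum_F by lia. replace (0+1)%Z with 1%Z by reflexivity. reflexivity.
 - destruct (Z.eqb_spec d 1).
   + rewrite e. replace (Fp om 1 - Fp om 1) with 0 by ring. rewrite Cexpi0. reflexivity.
   + rewrite wsum_F by lia. replace (d-1+1)%Z with d by ring. f_equal; ring. Qed.

Lemma ThR om n L M : ThetaR om n (S L) (S M) = Cexpi (phR om (pos (S L) (S M))).
Proof. unfold ThetaR. cbn [andb Nat.leb]. rewrite dd_pos. set (d := pos (S L) (S M)). unfold phR.
 destruct (Z.ltb_spec d 0).
 - rewrite wsum_F by lia. replace (0+1)%Z with 1%Z by reflexivity. reflexivity.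
 - destruct (Z.eqb_spec d 0).
   + rewrite e. replace (Fp om 1 - Fp om (0+1)) with 0 by (simpl; ring). rewrite Cexpi0. reflexivity.
   + rewrite wsum_F by lia. f_equal; ring. Qed.

Lemma ThS om n L M : ThetaS om n (S L) (S M) = Cexpi (phS om (pos (S L) (S M))).
Proof. unfold ThetaS. cbn [andb Nat.leb]. rewrite dd_pos. set (d := pos (S L) (S M)). unfold phS.
 destruct (Z.ltb_spec d 0).
 - rewrite wsum_F by lia. replace (-1+1)%Z with 0%Z by reflexivity. rewrite F0. f_equal; ring.
 - destruct (Z.eqb_spec d 0).
   + rewrite e, F0, Ropp_0, Cexpi0. reflexivity.
   + rewrite wsum_F by lia. replace (d-1+1)%Z with d by ring. rewrite F0. f_equal; ring. Qed.

Definition Csub (z w : Cx) : Cx := Cadd z (Copp w).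
Lemma Cring : ring_theory Czero Cone Cadd Cmul Csub Copp (@eq Cx).
Proof. constructor; intros; repeat match goal with z : Cx |- _ => destruct z end;
 unfold Csub, Czero, Cone, Cadd, Cmul, Copp; simpl; f_equal; ring. Qed.
Add Ring CxRing : Cring.

Lemma CR_mul a b : CR (a * b) = Cmul (CR a) (CR b).
Proof. unfold CR, Cmul; simpl; f_equal; ring. Qed.
Lemma CR_add a b : CR (a + b) = Cadd (CR a) (CR b).
Proof. unfold CR, Cadd; simpl; f_equal; ring. Qed.
Lemma CR_sub a b : CR (a - b) = Cadd (CR a) (Copp (CR b)).
Proof. unfold CR, Cadd, Copp; simpl; f_equal; ring. Qed.
Lemma CR0 : CR 0 = Czero. Proof. reflexivity. Qed.
Lemma E_mul a b : Cmul (Cexpi a) (Cexpi b) = Cexpi (a + b).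
Proof. unfold Cexpi, Cmul; simpl. rewrite cos_plus, sin_plus. f_equal; ring. Qed.

Definition form om (al be ga de : Cx) : M2 :=
  mkM2 (Cadd (Cmul al (a_ om 0)) (Cmul ga (c_ om 0)))
       (Cadd (Cmul al (b_ om 0)) (Cmul ga (d_ om 0)))
       (Cadd (Cmul be (c_ om 0)) (Cmul de (a_ om 0)))
       (Cadd (Cmul be (d_ om 0)) (Cmul de (b_ om 0))).

Lemma P_form om y al be ga de : Mmul (Pm om y) (form om al be ga de) =
  form om (Cadd (Cmul (a_ om y) al) (Cmul (b_ om y) de)) Czero
          (Cadd (Cmul (b_ om y) be) (Cmul (a_ om y) ga)) Czero.
Proof. unfold Mmul, Pm, form; simpl; f_equal; ring. Qed.
Lemma Q_form om y al be ga de : Mmul (Qm om y) (form om al be ga de) =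
  form om Czero (Cadd (Cmul (d_ om y) be) (Cmul (c_ om y) ga))
          Czero (Cadd (Cmul (c_ om y) al) (Cmul (d_ om y) de)).
Proof. unfold Mmul, Qm, form; simpl; f_equal; ring. Qed.
Lemma form_add om a1 b1 c1 d1 a2 b2 c2 d2 :
  Madd (form om a1 b1 c1 d1) (form om a2 b2 c2 d2) =
  form om (Cadd a1 a2) (Cadd b1 b2) (Cadd c1 c2) (Cadd d1 d2).
Proof. unfold Madd, form; simpl; f_equal; ring. Qed.
Lemma Mzero_form om : Mzero = form om Czero Czero Czero Czero.
Proof. unfold Mzero, form; f_equal; ring. Qed.

Definition CP om n l m := Cmul (CR (pH n l m)) (Cexpi (phP om (pos l m))).
Definition CQ om n l m := Cmul (CR (qH n l m)) (Cexpi (phQ om (pos l m))).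
Definition CRr om n l m := Cmul (CR (rH n l m)) (Cexpi (phR om (pos l m))).
Definition CS om n l m := Cmul (CR (rH n l m)) (Cexpi (phS om (pos l m))).

Lemma Xi_SS om n l m : Xi om (S n) (S l) (S m) =
  Madd (Mmul (Pm om (pos (S l) (S m) + 1)) (Xi om n l (S m)))
       (Mmul (Qm om (pos (S l) (S m) - 1)) (Xi om n (S l) m)).
Proof. reflexivity. Qed.
Lemma Xi_S0 om n l : Xi om (S n) (S l) 0 =
  Madd (Mmul (Pm om (pos (S l) 0 + 1)) (Xi om n l 0)) Mzero.
Proof. reflexivity. Qed.
Lemma Xi_0S om n m : Xi om (S n) 0 (S m) =
  Madd Mzero (Mmul (Qm om (pos 0 (S m) - 1)) (Xi om n 0 m)).
Proof. reflexivity. Qed.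

Lemma pos_l l m : pos l m = (pos (S l) m + 1)%Z. Proof. unfold pos; lia. Qed.
Lemma pos_m l m : pos l m = (pos l (S m) - 1)%Z. Proof. unfold pos; lia. Qed.

Lemma phP_step om x : Cexpi (phP om x) = Cmul (Cexpi (om (x+1)%Z)) (Cexpi (phP om (x+1))).
Proof. rewrite E_mul. f_equal. unfold phP. rewrite (Fstep om (x+1)). ring. Qed.
Lemma phR_step om x : Cexpi (phR om x) = Cmul (Cexpi (om (x+1)%Z)) (Cexpi (phR om (x+1))).
Proof. rewrite E_mul. f_equal. unfold phR. rewrite (Fstep om (x+1)). ring. Qed.
Lemma phQ_step om x : Cexpi (phQ om x) = Cmul (Cexpi (- om (x-1)%Z)) (Cexpi (phQ om (x-1))).
Proof. rewrite E_mul. f_equal. unfold phQ. rewrite <- (Z.sub_add 1 x) at 1. rewrite (Fstep om (x-1)). ring. Qed.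
Lemma phS_step om x : Cexpi (phS om x) = Cmul (Cexpi (- om (x-1)%Z)) (Cexpi (phS om (x-1))).
Proof. rewrite E_mul. f_equal. unfold phS. rewrite <- (Z.sub_add 1 x) at 1. rewrite (Fstep om (x-1)). ring. Qed.
Lemma phS_P om x : phS om (x+1) = phP om x. Proof. reflexivity. Qed.
Lemma phQ_R om x : phQ om (x+1) = phR om x. Proof. reflexivity. Qed.
Lemma phR_Q om x : phR om (x-1) = phQ om x. Proof. unfold phR, phQ. rewrite Z.sub_add. reflexivity. Qed.
Lemma phP_S om x : phP om (x-1) = phS om x. Proof. unfold phP, phS. rewrite Z.sub_add. reflexivity. Qed.

Ltac fin := unfold a_, b_, c_, d_; rewrite ?CR_mul, ?CR_add, ?CR_sub; ring.

Lemma Xi_form om n : forall l m, (l + m = S n)%nat ->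
  Xi om (S n) l m = form om (CP om (S n) l m) (CQ om (S n) l m) (CRr om (S n) l m) (CS om (S n) l m).
Proof. induction n; intros l m Hlm.
 - destruct l as [|[|l]]; destruct m as [|[|m]]; try lia.
   + rewrite Xi_0S. simpl Xi. unfold CP, CQ, CRr, CS.
     replace (pos 0 1 - 1)%Z with 0%Z by reflexivity.
     replace (phQ om (pos 0 1)) with 0 by (unfold phQ; replace (pos 0 1) with 1%Z by reflexivity; ring).
     rewrite Cexpi0. rewrite pH_0m, rH_0m. replace (qH 1 0 1) with 1 by reflexivity.
     unfold Madd, Mmul, Qm, Mid, Mzero, form; simpl; f_equal; rewrite ?CR0; try change (CR 1) with Cone; ring.
   + rewrite Xi_S0. simpl Xi. unfold CP, CQ, CRr, CS.
     replace (pos 1 0 + 1)%Z with 0%Z by reflexivity.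
     replace (phP om (pos 1 0)) with 0 by (unfold phP; replace (pos 1 0 + 1)%Z with 0%Z by reflexivity; rewrite F0; ring).
     rewrite Cexpi0. rewrite qH_l0, rH_l0. replace (pH 1 1 0) with 1 by reflexivity.
     unfold Madd, Mmul, Pm, Mid, Mzero, form; simpl; f_equal; rewrite ?CR0; try change (CR 1) with Cone; ring.
 - destruct l as [|l]; destruct m as [|m]; try lia.
   + rewrite Xi_0S, IHn by lia. rewrite Q_form, (Mzero_form om), form_add.
     unfold CP, CQ, CRr, CS. rewrite (pos_m 0 m). set (x := pos 0 (S m)).
     f_equal.
     * rewrite pH_0m, CR0. ring.
     * rewrite (recC (S n) 0 m) by lia. rewrite phR_Q, (phQ_step om x). fin.
     * rewrite rH_0m, CR0. ring.
     * rewrite (recD (S n) 0 m) by lia. rewrite phP_S, (phS_step om x). fin.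
   + rewrite Xi_S0, IHn by lia. rewrite P_form, (Mzero_form om), form_add.
     unfold CP, CQ, CRr, CS. rewrite (pos_l l 0). set (x := pos (S l) 0).
     f_equal.
     * rewrite (recA (S n) l 0) by lia. rewrite phS_P, (phP_step om x). fin.
     * rewrite qH_l0, CR0. ring.
     * rewrite (recB (S n) l 0) by lia. rewrite phQ_R, (phR_step om x). fin.
     * rewrite rH_l0, CR0. ring.
   + rewrite Xi_SS, !IHn by lia. rewrite P_form, Q_form, form_add.
     unfold CP, CQ, CRr, CS. rewrite (pos_l l (S m)), (pos_m (S l) m). set (x := pos (S l) (S m)).
     f_equal.
     * rewrite (recA (S n) l (S m)) by lia. rewrite phS_P, (phP_step om x). fin.
     * rewrite (recC (S n) (S l) m) by lia. rewrite phR_Q, (phQ_step om x). fin.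
     * rewrite (recB (S n) l (S m)) by lia. rewrite phQ_R, (phR_step om x). fin.
     * rewrite (recD (S n) (S l) m) by lia. rewrite phP_S, (phS_step om x). fin.
Qed.

Definition U om := Cadd (Cmul (a_ om 0%Z) (CR s2)) (Cmul (b_ om 0%Z) (0, s2)).
Definition V om := Cadd (Cmul (c_ om 0%Z) (CR s2)) (Cmul (d_ om 0%Z) (0, s2)).

Lemma Mapply_form om al be ga de : Mapply (form om al be ga de) phi_star =
  (Cadd (Cmul al (U om)) (Cmul ga (V om)), Cadd (Cmul be (V om)) (Cmul de (U om))).
Proof. unfold Mapply, form, phi_star, U, V; simpl; f_equal; ring. Qed.

Lemma s2s2 : s2 * s2 = / 2.
Proof. rewrite <- Rinv_mult. rewrite sqrt_sqrt by lra. reflexivity. Qed.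

Lemma U_eq om : U om = Cmul (CR (/2)) (cos (om 0%Z), sin (om 0%Z) + 1).
Proof. unfold U, a_, b_, Cexpi, Cmul, Cadd, CR; simpl. rewrite <- s2s2. f_equal; ring. Qed.
Lemma V_eq om : V om = Cmul (CR (/2)) (1 - sin (om 0%Z), - cos (om 0%Z)).
Proof. unfold V, c_, d_, Cexpi, Cmul, Cadd, CR, Copp; simpl. rewrite cos_neg, sin_neg. rewrite <- s2s2. f_equal; ring. Qed.

Lemma N1 p r e1 e2 u v : Cnorm2 e1 = 1 -> Cnorm2 e2 = 1 ->
  Cnorm2 (Cadd (Cmul (Cmul (CR p) e1) u) (Cmul (Cmul (CR r) e2) v)) =
  p^2 * Cnorm2 u + r^2 * Cnorm2 v + 2 * p * r * Cre (Cmul (Cmul e1 (Cconj e2)) (Cmul u (Cconj v))).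
Proof. intros H1 H2.
 transitivity (p^2 * Cnorm2 e1 * Cnorm2 u + r^2 * Cnorm2 e2 * Cnorm2 v + 2 * p * r * Cre (Cmul (Cmul e1 (Cconj e2)) (Cmul u (Cconj v)))).
 - destruct e1, e2, u, v. unfold Cnorm2, Cadd, Cmul, CR, Cre, Cconj; simpl. ring.
 - rewrite H1, H2. ring. Qed.

Lemma normE t : Cnorm2 (Cexpi t) = 1.
Proof. unfold Cnorm2, Cexpi; simpl. generalize (sin2_cos2 t). unfold Rsqr. lra. Qed.

Lemma nU w : Cnorm2 (Cmul (CR (/2)) (cos w, sin w + 1)) = / 2 * (1 + sin w).
Proof. unfold Cnorm2, Cmul, CR; simpl. generalize (sin2_cos2 w). unfold Rsqr. intros H. nra. Qed.
Lemma nV w : Cnorm2 (Cmul (CR (/2)) (1 - sin w, - cos w)) = / 2 * (1 - sin w).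
Proof. unfold Cnorm2, Cmul, CR; simpl. generalize (sin2_cos2 w). unfold Rsqr. intros H. nra. Qed.

Lemma cross1 w e1 e2 :
  Cre (Cmul (Cmul e1 (Cconj e2)) (Cmul (Cmul (CR (/2)) (cos w, sin w + 1)) (Cconj (Cmul (CR (/2)) (1 - sin w, - cos w))))) =
  - / 4 * Cim (Cmul (Cmul (Cadd Cone (Cexpi (2 * w))) e1) (Cconj e2)).
Proof. destruct e1, e2. unfold Cre, Cim, Cmul, Cconj, Cadd, Cone, CR, Cexpi; simpl.
 rewrite cos_2a, sin_2a. field. Qed.
Lemma cross2 w e1 e2 :
  Cre (Cmul (Cmul e1 (Cconj e2)) (Cmul (Cmul (CR (/2)) (1 - sin w, - cos w)) (Cconj (Cmul (CR (/2)) (cos w, sin w + 1))))) =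
  - / 4 * Cim (Cmul (Cmul (Cadd Cone (Cexpi (2 * w))) e2) (Cconj e1)).
Proof. destruct e1, e2. unfold Cre, Cim, Cmul, Cconj, Cadd, Cone, CR, Cexpi; simpl.
 rewrite cos_2a, sin_2a. field. Qed.

Lemma prob_form om p q r tp tq tr ts :
 Vnorm2 (Mapply (form om (Cmul (CR p) (Cexpi tp)) (Cmul (CR q) (Cexpi tq))
                          (Cmul (CR r) (Cexpi tr)) (Cmul (CR r) (Cexpi ts))) phi_star)
 = / 2 * (p^2 * (1 + sin (om 0%Z)) + q^2 * (1 - sin (om 0%Z)) + 2 * r^2)
   - r / 2 * ( p * Cim (Cmul (Cmul (Cadd Cone (Cexpi (2 * om 0%Z))) (Cexpi tp)) (Cconj (Cexpi tr)))
             + q * Cim (Cmul (Cmul (Cadd Cone (Cexpi (2 * om 0%Z))) (Cexpi ts)) (Cconj (Cexpi tq)))).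
Proof.
 rewrite Mapply_form. unfold Vnorm2. cbn [fst snd].
 rewrite !N1 by apply normE. rewrite U_eq, V_eq, nU, nV, cross1, cross2. field. Qed.

Lemma prob_S om n l m : (l + m = S n)%nat ->
  prob om (S n) l m =
  / 2 * (pH (S n) l m ^2 * (1 + sin (om 0%Z)) + qH (S n) l m ^2 * (1 - sin (om 0%Z)) + 2 * rH (S n) l m ^2)
   - rH (S n) l m / 2 * ( pH (S n) l m * Cim (Cmul (Cmul (Cadd Cone (Cexpi (2 * om 0%Z))) (Cexpi (phP om (pos l m)))) (Cconj (Cexpi (phR om (pos l m)))))
             + qH (S n) l m * Cim (Cmul (Cmul (Cadd Cone (Cexpi (2 * om 0%Z))) (Cexpi (phS om (pos l m)))) (Cconj (Cexpi (phQ om (pos l m)))))).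
Proof. intros H. unfold prob. rewrite Xi_form by exact H. unfold CP, CQ, CRr, CS. apply prob_form. Qed.

Lemma Im_triv : Cim (Cmul (Cmul (Cadd Cone (Cexpi (2 * env0 0%Z))) (Cexpi 0)) (Cconj (Cexpi 0))) = 0.
Proof. unfold env0. rewrite Rmult_0_r, Cexpi0. unfold Cim, Cmul, Cadd, Cone, Cconj; simpl. ring. Qed.

Theorem mainTheorem5 (om : env) (n l m : nat) (hn : n = (l + m)%nat) :
  prob om n l m =
    prob env0 n l m
    + / 2 * (pH n l m ^ 2 - qH n l m ^ 2) * sin (om 0%Z)
    - rH n l m / 2 *
      ( pH n l m *
          Cim (Cmul (Cmul (Cadd Cone (Cexpi (2 * om 0%Z))) (ThetaP om n l m))
                    (Cconj (ThetaR om n l m)))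
      + qH n l m *
          Cim (Cmul (Cmul (Cadd Cone (Cexpi (2 * om 0%Z))) (ThetaS om n l m))
                    (Cconj (ThetaQ om n l m)))).
Proof.
 destruct n as [|n].
 - assert (l = 0%nat) by lia. assert (m = 0%nat) by lia. subst.
   replace (prob om 0 0 0) with (prob env0 0 0 0) by reflexivity.
   replace (pH 0 0 0) with 1 by reflexivity. replace (qH 0 0 0) with 1 by reflexivity.
   replace (rH 0 0 0) with 0 by reflexivity. field.
 - rewrite !prob_S by lia.
   assert (Z0: forall x, phP env0 x = 0 /\ phQ env0 x = 0 /\ phR env0 x = 0 /\ phS env0 x = 0).
   { intros x. unfold phP, phQ, phR, phS. rewrite !F_env0. repeat split; ring. }
   destruct (Z0 (pos l m)) as (A1 & A2 & A3 & A4). rewrite A1, A2, A3, A4, !Im_triv.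
   replace (env0 0%Z) with 0 by reflexivity. rewrite sin_0.
   destruct l as [|L]; [rewrite rH_0m; unfold Rdiv; ring|]. destruct m as [|M]; [rewrite rH_l0; unfold Rdiv; ring|].
   rewrite ThP, ThQ, ThR, ThS. unfold Rdiv; ring. Qed.
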